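(* Let $n\ge 2$ be an integer, $C\ge 4$ a constant, $Z$ a finite set, and $T_1,T_2$ rooted $Z$-trees with $\mathrm{Seq}(T_1)=\mathrm{Seq}(T_2)$. Let $Q_1,\dots,Q_k$ and $R_1,\dots,R_m$ be as defined in the context. Suppose $|Q_j|\le 2|Z|/C$ and $|R_l|\le 2|Z|/C$ for all $j,l$, and that at least one of $Q_1,\dots,Q_k,R_1,\dots,R_m$ has size at least $|Z|/\log n$. Then there exists a good pair $(x,Y)$ (with respect to $n$, $T_1$, $T_2$).
   Context: A rooted $Z$-tree is a binary rooted tree with a root of degree two, all other internal nodes of degree three, leaves bijectively labeled by $Z$, and each internal node having a designated left child and right child. $T_v$ is the subtree rooted at node $v$; $\mathrm{Le}(\cdot)$ is the leaf set; the size of a tree is its number of leaves. $x\preceq y$ means $x$ is a descendant of $y$ ($x\prec y$ if also $x\neq y$); $\mathrm{lca}_T(W)$ is the lowest node having all elements of $W$ as descendants. $\mathrm{Seq}(T)$ is the left-to-right leaf ordering given by pre-order traversal (left child before right child). Let $P_1=(u_1,\dots,u_k)$ be the path in $T_1$ from its left-most leaf $u_1$ to its root $u_k$; $Q_1:=$ the one-leaf tree $u_1$ and for $2\le j\le k$, $Q_j:=(T_1)_c$ with $c$ the child of $u_j$ other than $u_{j-1}$. Let $P_2=(w_1,\dots,w_m)$ be the path in $T_2$ from its root $w_1$ to its right-most leaf $w_m$; $R_m:=$ the one-leaf tree $w_m$ and for $1\le l<m$, $R_l:=(T_2)_c$ with $c$ the child of $w_l$ other than $w_{l+1}$. A good pair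 (with respect to $n$, $T_1$, $T_2$) is a pair $(x,Y)$ with $x\in Z$, $\emptyset\ne Y\subset Z$, such that $\mathrm{lca}_{T_1}(Y)\prec\mathrm{lca}_{T_1}(Y\cup\{x\})$, $\mathrm{lca}_{T_2}(Y)\prec\mathrm{lca}_{T_2}(Y\cup\{x\})$, and $|Y|\ge |Z|/(2\log n)$. $\log=\log_2$. *)

(* Defs.v *)
From mathcomp Require Import all_boot.
From Stdlib Require Import Reals.

Set Implicit Arguments.
Unset Strict Implicit.
Unset Printing Implicit Defensive.

Inductive tree (Z : Type) : Type :=
| Leaf of Z
| Node of tree Z & tree Z.

Arguments Leaf {Z}.
Arguments Node {Z}.

Section Trees.
Variable Z : finType.

Fixpoint leaves (T : tree Z) : seq Z :=
  match T with
  | Leaf z => [:: z]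
  | Node l r => leaves l ++ leaves r
  end.

Definition Le (T : tree Z) : {set Z} := [set z | z \in leaves T].

Definition tree_size (T : tree Z) : nat := size (leaves T).

(* rooted Z-tree: root has degree two (root is not a leaf), internal nodes
   binary, leaves bijectively labeled by Z. *)
Definition is_ztree (T : tree Z) : bool :=
  [&& (if T is Node _ _ then true else false),
      uniq (leaves T) & perm_eq (leaves T) (enum Z)].

(* Nodes are addressed by their path from the root
   (false = go to left child, true = go to right child). *)
Definition node := seq bool.

(* x ⪯ y : x is a descendant of y, i.e. the path of y is a prefix of that of x *)
Definition desc (x y : node) : bool := prefix y x.
Definition sdesc (x y : node) : bool := desc x y && (x != y).

Fixpoint lca (T : tree Z) (W : {set Z}) : node :=
  match T with
  | Leaf _ => [::]
  | Node l r =>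
      if W \subset Le l then false :: lca l W
      else if W \subset Le r then true :: lca r W
      else [::]
  end.

(* Q_1,...,Q_k: along the path from the left-most leaf to the root, the
   left-most leaf itself and, for each internal node u_j, the child other than
   u_{j-1} (i.e. its right child).  Listed here from the root downwards. *)
Fixpoint Qs (T : tree Z) : seq (tree Z) :=
  match T with
  | Leaf z => [:: Leaf z]
  | Node l r => r :: Qs l
  end.

(* R_1,...,R_m: along the path from the root to the right-most leaf, for each
   internal node w_l the child other than w_{l+1} (its left child), and the
   right-most leaf itself. *)
Fixpoint Rs (T : tree Z) : seq (tree Z) :=
  match T with
  | Leaf z => [:: Leaf z]
  | Node l r => l :: Rs r
  end.

End Trees.

Local Open Scope R_scope.

Definition log2 (x : R) : R := ln x / ln 2.

Definition good_pair (Z : finType) (n : nat) (T1 T2 : tree Z)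
    (x : Z) (Y : {set Z}) : Prop :=
  Y != set0 /\
  sdesc (lca T1 Y) (lca T1 (x |: Y)) /\
  sdesc (lca T2 Y) (lca T2 (x |: Y)) /\
  INR #|Y| >= INR #|Z| / (2 * log2 (INR n)).

(* Main.v *)
Require Import Defs.
From mathcomp Require Import all_boot.
From Stdlib Require Import Reals.
From Stdlib Require Import Lra Lia.
From mathcomp Require Import zify.

Set Implicit Arguments.
Unset Strict Implicit.
Section Comb.
Variable Z : finType.
Implicit Types T S l r : tree Z.

Fixpoint isSub S T : Prop :=
  S = T \/ match T with Leaf _ => False | Node l r => isSub S l \/ isSub S r end.

Lemma inLe T z : (z \in Le T) = (z \in leaves T).
Proof. by rewrite inE. Qed.

Lemma Le_Node l r z : (z \in Le (Node l r)) = (z \in Le l) || (z \in Le r).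
Proof. by rewrite !inLe /= mem_cat. Qed.

Lemma leaves_ne T : exists z, z \in leaves T.
Proof.
elim: T => [z|l [z Hz] r _]; first by exists z; rewrite inE.
by exists z; rewrite /= mem_cat Hz.
Qed.

Lemma Le_ne T : Le T != set0.
Proof. apply/set0Pn; have [z Hz] := leaves_ne T; exists z; by rewrite inLe. Qed.

Lemma disj l r z : uniq (leaves (Node l r)) -> z \in Le l -> z \in Le r -> False.
Proof.
rewrite /= cat_uniq => /and3P [_ H _]; rewrite !inLe => Hl Hr.
by move/hasP: H; apply; exists z.
Qed.

Lemma sdesc_cons b a c : sdesc (b :: a) (b :: c) = sdesc a c.
Proof. by rewrite /sdesc /desc prefix_cons eqxx /= eqseq_cons eqxx. Qed.

Lemma sdesc_nil b a : sdesc (b :: a) [::].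
Proof. by []. Qed.

Lemma isSub_Le S T : isSub S T -> Le S \subset Le T.
Proof.
elim: T => [w|l IHl r IHr] [E|H]; try (by subst; apply: subxx); first by case: H.
case: H => [/IHl|/IHr] /subsetP H; apply/subsetP => z /H Hz; by rewrite Le_Node Hz ?orbT.
Qed.

Lemma isSub_uniq S T : isSub S T -> uniq (leaves T) -> uniq (leaves S).
Proof.
elim: T => [w|l IHl r IHr] [E|H]; try (by move=> h; subst).
rewrite /= cat_uniq => /and3P [ul _ ur]; case: H => [/IHl|/IHr]; auto.
Qed.

Lemma G T : uniq (leaves T) -> forall S (Y : {set Z}) x, isSub S T ->
  Y \subset Le S -> Y != set0 -> x \in Le T -> x \notin Le S ->
  sdesc (lca T Y) (lca T (x |: Y)).
Proof.
elim: T => [w|l IHl r IHr] Hu S Y x HS HY Yn Hx HxS.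
  case: HS => [E|[]]; by subst; rewrite Hx in HxS.
have [y Hy] := set0Pn _ Yn.
have ul : uniq (leaves l) by move: Hu; rewrite /= cat_uniq => /and3P [].
have ur : uniq (leaves r) by move: Hu; rewrite /= cat_uniq => /and3P [].
case: HS => [E|[HS|HS]]; first by subst; rewrite Hx in HxS.
- have HYl : Y \subset Le l by exact: (subset_trans HY (isSub_Le HS)).
  have yl : y \in Le l by exact: (subsetP HYl y Hy).
  rewrite /= HYl.
  case Hxl: (x \in Le l).
    rewrite subUset sub1set Hxl HYl /= sdesc_cons.
    exact: (IHl ul S Y x HS HY Yn Hxl HxS).
  have -> : (x |: Y \subset Le l) = false by rewrite subUset sub1set Hxl.
  have -> : (x |: Y \subset Le r) = false.
    apply/negbTE/negP; rewrite subUset => /andP [_ /subsetP /(_ y Hy) yr].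
    exact: (disj Hu yl yr).
  by [].
- have HYr : Y \subset Le r by exact: (subset_trans HY (isSub_Le HS)).
  have yr : y \in Le r by exact: (subsetP HYr y Hy).
  have HYl : (Y \subset Le l) = false.
    apply/negbTE/negP => /subsetP /(_ y Hy) yl; exact: (disj Hu yl yr).
  rewrite /= HYl HYr.
  have -> : (x |: Y \subset Le l) = false by rewrite subUset HYl andbF.
  case Hxr: (x \in Le r).
    rewrite subUset sub1set Hxr HYr /= sdesc_cons.
    exact: (IHr ur S Y x HS HY Yn Hxr HxS).
  by rewrite subUset sub1set Hxr.
Qed.

Lemma leaves_cons T : exists a s, leaves T = a :: s.
Proof. have [z Hz] := leaves_ne T; case E: (leaves T) Hz => [|a s] //; by exists a, s. Qed.

Lemma head_in T d : head d (leaves T) \in Le T.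
Proof. have [a [s E]] := leaves_cons T; by rewrite inLe E /= mem_head. Qed.

Lemma last_in T d : last d (leaves T) \in Le T.
Proof. have [a [s E]] := leaves_cons T; by rewrite inLe E /= mem_last. Qed.

Lemma QsHead T S d : uniq (leaves T) -> List.In S (Qs T) ->
  tree_size S = 1%N \/ head d (leaves T) \notin Le S.
Proof.
elim: T S => [w|l IHl r IHr] S Hu /= HS.
  case: HS => [<-|[]]; by left.
have ul : uniq (leaves l) by move: Hu; rewrite /= cat_uniq => /and3P [].
have [a [s E]] := leaves_cons l.
have Eh : head d (leaves l ++ leaves r) = head d (leaves l) by rewrite E.
rewrite Eh; case: HS => [<-|HS].
  right; apply/negP => Hr; exact: (disj Hu (head_in l d) Hr).
exact: IHl.
Qed.

Lemma RsLast T S d : uniq (leaves T) -> List.In S (Rs T) ->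
  tree_size S = 1%N \/ last d (leaves T) \notin Le S.
Proof.
elim: T S => [w|l IHl r IHr] S Hu /= HS.
  case: HS => [<-|[]]; by left.
have ur : uniq (leaves r) by move: Hu; rewrite /= cat_uniq => /and3P [].
have [a [s E]] := leaves_cons r.
have Eh : last d (leaves l ++ leaves r) = last d (leaves r) by rewrite last_cat E.
rewrite Eh; case: HS => [<-|HS].
  right; apply/negP => Hl; exact: (disj Hu Hl (last_in r d)).
exact: IHr.
Qed.

Lemma arith1 s p q : s <= p + q -> 0 < s -> q <= p -> 0 < p /\ s <= 2 * p.
Proof. move=> *; lia. Qed.
Lemma arith2 s p q : s <= p + q -> 0 < s -> p < q -> 0 < q /\ s <= 2 * q.
Proof. move=> *; lia. Qed.

Lemma isSub_refl S : isSub S S.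
Proof. by case: S => *; left. Qed.

Lemma core T T' a b S : uniq (leaves T) -> uniq (leaves T') -> T' = Node a b ->
  (forall z, z \in Le T) -> (forall z, z \in Le T') -> isSub S T ->
  (exists z, z \notin Le S) ->
  (Le a \subset Le S -> #|Le S| <= 2 * #|Le a|) ->
  (Le b \subset Le S -> #|Le S| <= 2 * #|Le b|) ->
  exists x (Y : {set Z}), [/\ Y != set0, #|Le S| <= 2 * #|Y|,
     sdesc (lca T Y) (lca T (x |: Y)) & sdesc (lca T' Y) (lca T' (x |: Y))].
Proof.
move=> uT uT' ET' allT allT' HS [z Hz] Ha Hb.
have uab := uT'; rewrite ET' in uab.
have sa : isSub a T' by rewrite ET' /=; right; left; exact: isSub_refl.
have sb : isSub b T' by rewrite ET' /=; right; right; exact: isSub_refl.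
have AB w : (w \in Le a) || (w \in Le b) by rewrite -Le_Node -ET'.
case: (boolP (Le a \subset Le S)) => hA.
  have za : z \notin Le a by apply/negP => /(subsetP hA); rewrite (negbTE Hz).
  exists z; exists (Le a); split; first exact: Le_ne; first exact: Ha.
  - exact: (G uT HS hA (Le_ne a) (allT z) Hz).
  - exact: (G uT' sa (subxx _) (Le_ne a) (allT' z) za).
case: (boolP (Le b \subset Le S)) => hB.
  have zb : z \notin Le b by apply/negP => /(subsetP hB); rewrite (negbTE Hz).
  exists z; exists (Le b); split; first exact: Le_ne; first exact: Hb.
  - exact: (G uT HS hB (Le_ne b) (allT z) Hz).
  - exact: (G uT' sb (subxx _) (Le_ne b) (allT' z) zb).
have [a0 a0A a0S] := subsetPn hA.
have [b0 b0B b0S] := subsetPn hB.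
have Hcov : #|Le S| <= #|Le S :&: Le a| + #|Le S :&: Le b|.
  rewrite -cardsUI; apply: leq_trans (leq_addr _ _); apply: subset_leq_card.
  apply/subsetP => w Hw; rewrite !inE -!inLe Hw /=; exact: AB.
have [w Hw] := set0Pn _ (Le_ne S).
have Hpos : 0 < #|Le S| by apply/card_gt0P; exists w.
case: (leqP #|Le S :&: Le b| #|Le S :&: Le a|) => Hc.
  have b0a : b0 \notin Le a by apply/negP => H; exact: (disj uab H b0B).
  have [H1 H2] := arith1 Hcov Hpos Hc.
  have Yn : Le S :&: Le a != set0 by rewrite -card_gt0.
  exists b0; exists (Le S :&: Le a); split => //.
  - exact: (G uT HS (subsetIl _ _) Yn (allT b0) b0S).
  - exact: (G uT' sa (subsetIr _ _) Yn (allT' b0) b0a).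
have a0b : a0 \notin Le b by apply/negP => H; exact: (disj uab a0A H).
have [H1 H2] := arith2 Hcov Hpos Hc.
have Yn : Le S :&: Le b != set0 by rewrite -card_gt0.
exists a0; exists (Le S :&: Le b); split => //.
- exact: (G uT HS (subsetIl _ _) Yn (allT a0) a0S).
- exact: (G uT' sb (subsetIr _ _) Yn (allT' a0) a0b).
Qed.

Lemma sz S T : isSub S T -> uniq (leaves T) -> #|Le S| = tree_size S.
Proof. move=> H /(isSub_uniq H) u; rewrite /Le cardsE; exact/card_uniqP. Qed.

Lemma Qs_sub T S : List.In S (Qs T) -> isSub S T.
Proof.
elim: T S => [w|l IHl r IHr] S /=.
  by case=> [<-|[]]; left.
case=> [<-|H]; right; [right; exact: isSub_refl | left; exact: IHl].
Qed.

Lemma Rs_sub T S : List.In S (Rs T) -> isSub S T.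
Proof.
elim: T S => [w|l IHl r IHr] S /=.
  by case=> [<-|[]]; left.
case=> [<-|H]; right; [left; exact: isSub_refl | right; exact: IHr].
Qed.

Lemma ztree_all T : is_ztree T -> forall z, z \in Le T.
Proof. case/and3P => _ _ P z; by rewrite inLe (perm_mem P) mem_enum. Qed.

Lemma ztree_card T : is_ztree T -> #|Z| = size (leaves T).
Proof. case/and3P => _ _ P; by rewrite (perm_size P) cardT. Qed.

Lemma arith3 s N a b : 2 * s <= N -> 2 * a <= N -> a + b = N -> s <= 2 * b.
Proof. move=> *; lia. Qed.

Lemma arith4 s N : 0 < s -> 2 * s <= N -> s < N.
Proof. move=> *; lia. Qed.

Lemma notall S : #|Le S| < #|Z| -> exists z, z \notin Le S.
Proof.
move=> H; have : ~~ ([set: Z] \subset Le S).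
  apply/negP => /subset_leq_card; rewrite cardsT leqNgt H; by [].
by case/subsetPn => z _ Hz; exists z.
Qed.
End Comb.

Unset Implicit Arguments.
Set Strict Implicit.
Local Open Scope R_scope.

Lemma rbound (a b : nat) (C : R) : 4 <= C -> INR a <= 2 * INR b / C -> (2 * a <= b)%nat.
Proof.
move=> HC H.
have Cp : 0 < C by lra.
have H1 : INR a * C <= 2 * INR b.
  have := Rmult_le_compat_r C _ _ (Rlt_le _ _ Cp) H.
  have -> : 2 * INR b / C * C = 2 * INR b by field; lra.
  by [].
have Ha := pos_INR a.
have H2 : 2 * INR a <= INR b by nra.
apply/leP; apply: INR_le.
rewrite -[(2*a)%nat]/(Nat.mul 2 a) mult_INR.
have -> : INR 2 = 2 by simpl; lra.
exact: H2.
Qed.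

Lemma rfinal (n s y N : nat) : (2 <= n)%nat -> INR s >= INR N / log2 (INR n) ->
  (s <= 2 * y)%nat -> INR y >= INR N / (2 * log2 (INR n)).
Proof.
move=> Hn Hs Hy.
have n2 : 2 <= INR n.
  have := le_INR 2 n (elimT leP Hn); by simpl; lra.
have l2 : 0 < ln 2 by rewrite -ln_1; apply: ln_increasing; lra.
have ln : 0 < ln (INR n) by rewrite -ln_1; apply: ln_increasing; lra.
have L : 0 < log2 (INR n) by rewrite /log2; apply: Rdiv_lt_0_compat.
have Hy' : INR s <= 2 * INR y.
  have := le_INR _ _ (elimT leP Hy).
  rewrite -[(2*y)%nat]/(Nat.mul 2 y) mult_INR.
  have -> : INR 2 = 2 by simpl; lra.
  by [].
have -> : INR N / (2 * log2 (INR n)) = (INR N / log2 (INR n)) / 2 by field; lra.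
lra.
Qed.

Lemma In_cat (T : Type) (x : T) (s1 s2 : seq T) : List.In x (s1 ++ s2) -> List.In x s1 \/ List.In x s2.
Proof. elim: s1 => [|a s IH] /=; [by right | case=> [->|/IH [H|H]]; tauto]. Qed.

Lemma arith5 a : (0 < a)%nat -> (1 <= 2 * a)%nat.
Proof. by move=> H; rewrite mul2n -addnn (leq_trans H) // leq_addr. Qed.

Theorem lemma3 (n : nat) (C : R) (Z : finType) (T1 T2 : tree Z) :
  (2 <= n)%nat ->
  (4 <= C) ->
  is_ztree T1 -> is_ztree T2 ->
  leaves T1 = leaves T2 ->
  (forall Q, List.In Q (Qs T1) -> (INR (tree_size Q) <= 2 * INR #|Z| / C)) ->
  (forall R', List.In R' (Rs T2) -> (INR (tree_size R') <= 2 * INR #|Z| / C)) ->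
  (exists S, List.In S (Qs T1 ++ Rs T2) /\ (INR (tree_size S) >= INR #|Z| / log2 (INR n))) ->
  exists (x : Z) (Y : {set Z}), good_pair n T1 T2 x Y.
Proof.
move=> Hn HC z1 z2 E HQ HR [S [HS Hbig]].
have all1 := ztree_all z1; have all2 := ztree_all z2.
have u1 : uniq (leaves T1) by case/and3P: z1.
have u2 : uniq (leaves T2) by case/and3P: z2.
case: T1 z1 E HQ HS all1 u1 => [w1 /and3P [] //|l1 r1] z1 E HQ HS all1 u1.
case: T2 z2 E HR HS all2 u2 => [w2 /and3P [] //|l2 r2] z2 E HR HS all2 u2.
have c1 := ztree_card z1; have c2 := ztree_card z2.
have s_l1 : isSub l1 (Node l1 r1) by right; left; exact: isSub_refl.
have s_r1 : isSub r1 (Node l1 r1) by right; right; exact: isSub_refl.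
have s_l2 : isSub l2 (Node l2 r2) by right; left; exact: isSub_refl.
have s_r2 : isSub r2 (Node l2 r2) by right; right; exact: isSub_refl.
rewrite /= size_cat in c1; rewrite /= size_cat in c2.
have bl2 := rbound _ _ _ HC (HR l2 (or_introl erefl)).
have br1 := rbound _ _ _ HC (HQ r1 (or_introl erefl)).
case: (In_cat _ _ _ _ HS) => HS'.
- have sS := Qs_sub HS'.
  have szS := sz sS u1.
  have bS := rbound _ _ _ HC (HQ S HS').
  have pos : (0 < tree_size S)%nat by rewrite -szS card_gt0; exact: Le_ne.
  have [z Hz] : exists z, z \notin Le S.
    apply: notall; rewrite szS; exact: arith4.
  have Ha : Le l2 \subset Le S -> (#|Le S| <= 2 * #|Le l2|)%nat.
    move=> H; case: (QsHead z u1 HS') => [H1|H2].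
      rewrite szS H1; apply: arith5; rewrite card_gt0; exact: Le_ne.
    exfalso; move: H2; rewrite E.
    have [a [s El]] := leaves_cons l2.
    have -> : head z (leaves (Node l2 r2)) = head z (leaves l2) by rewrite /= El.
    by rewrite (subsetP H _ (head_in l2 z)).
  have Hb : Le r2 \subset Le S -> (#|Le S| <= 2 * #|Le r2|)%nat.
    move=> _; rewrite szS (sz s_r2 u2).
    apply: (arith3 (N := #|Z|) (a := tree_size l2)) => //.
  have [x [Y [Yn Hsz d1 d2]]] := core u1 u2 erefl all1 all2 sS (ex_intro _ z Hz) Ha Hb.
  exists x, Y; split => //; split => //; split => //.
  rewrite szS in Hsz; exact: (rfinal _ _ _ _ Hn Hbig Hsz).
- have sS := Rs_sub HS'.
  have szS := sz sS u2.
  have bS := rbound _ _ _ HC (HR S HS').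
  have pos : (0 < tree_size S)%nat by rewrite -szS card_gt0; exact: Le_ne.
  have [z Hz] : exists z, z \notin Le S.
    apply: notall; rewrite szS; exact: arith4.
  have Hb : Le r1 \subset Le S -> (#|Le S| <= 2 * #|Le r1|)%nat.
    move=> H; case: (RsLast z u2 HS') => [H1|H2].
      rewrite szS H1; apply: arith5; rewrite card_gt0; exact: Le_ne.
    exfalso; move: H2; rewrite -E.
    have [a [s El]] := leaves_cons r1.
    have -> : last z (leaves (Node l1 r1)) = last z (leaves r1) by rewrite /= last_cat El.
    by rewrite (subsetP H _ (last_in r1 z)).
  have Ha : Le l1 \subset Le S -> (#|Le S| <= 2 * #|Le l1|)%nat.
    move=> _; rewrite szS (sz s_l1 u1).
    apply: (arith3 (N := #|Z|) (a := tree_size r1)) => //.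
    by rewrite /tree_size c1 addnC.
  have [x [Y [Yn Hsz d2 d1]]] := core u2 u1 erefl all2 all1 sS (ex_intro _ z Hz) Ha Hb.
  exists x, Y; split => //; split => //; split => //.
  rewrite szS in Hsz; exact: (rfinal _ _ _ _ Hn Hbig Hsz).
Qed.
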